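(* Let $p$ be a prime and let $\lambda_1\ge\lambda_2\ge\cdots$ and $\nu_1\ge\nu_2\ge\cdots$ be finitely supported sequences of nonnegative integers with $\nu_i\le\lambda_i$ for all $i$. Then $$\prod_{i\ge1}p^{\nu_i(\lambda_i-\nu_i)}\ \le\ \prod_{i\ge1}p^{\nu_{i+1}(\lambda_i-\nu_i)}\begin{bmatrix}\lambda_i-\nu_{i+1}\\ \nu_i-\nu_{i+1}\end{bmatrix}_p\ \le\ p^{\nu_1}\prod_{i\ge1}p^{\nu_i(\lambda_i-\nu_i)}.$$
   Context: $\begin{bmatrix}\lambda\\ \nu\end{bmatrix}_p$ denotes the $p$-binomial coefficient, i.e. the number of $\nu$-dimensional subspaces of a $\lambda$-dimensional vector space over $\mathbb Z/p\mathbb Z$. *)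

(* Defs.v *)
From mathcomp Require Import all_boot.
Set Implicit Arguments. Unset Strict Implicit. Unset Printing Implicit Defensive.

(* Gaussian (q-)binomial coefficient [n choose k]_q, via the q-Pascal rule
   [n+1, k+1]_q = [n, k]_q + q^(k+1) [n, k+1]_q, with [n,0]_q = 1 and
   [0,k+1]_q = 0.  For q = p prime this is the number of k-dimensional
   subspaces of an n-dimensional vector space over Z/pZ. *)
Fixpoint gbinom (q n k : nat) {struct n} : nat :=
  match n, k with
  | _, 0 => 1
  | 0, _.+1 => 0
  | n'.+1, k'.+1 => gbinom q n' k' + q ^ k * gbinom q n' k
  end.

Definition noninc (f : nat -> nat) : Prop := forall i, f i.+1 <= f i.

(* Main.v *)
Require Import Defs.
From mathcomp Require Import all_boot.
From mathcomp Require Import zify.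

Lemma gbinom0 p n k : n < k -> gbinom p n k = 0.
Proof.
elim: n k => [|n IH] [|k] //= H.
by rewrite !IH //; lia.
Qed.

Lemma gbS p n k : gbinom p n.+1 k.+1 = gbinom p n k + p ^ k.+1 * gbinom p n k.+1.
Proof. by []. Qed.
Lemma gbn0 p n : gbinom p n 0 = 1.
Proof. by case: n. Qed.

Lemma pascal2 p n k :
  gbinom p n.+1 k.+1 = p ^ (n - k) * gbinom p n k + gbinom p n k.+1.
Proof.
elim: n k => [|n IH] k.
  case: k => [|k] /=; first by rewrite muln0 expn0.
  by rewrite !muln0.
case: k => [|k].
  rewrite gbS !gbn0 !subn0 muln1.
  have e1 := IH 0; rewrite gbn0 subn0 muln1 in e1.
  have e2 := gbS p n 0; rewrite gbn0 in e2.
  rewrite e1 in e2; rewrite e1 mulnDr (expnS p n) expn1 addnA [1 + _]addnC -addnA.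
  rewrite expn1 in e2; by rewrite -e2.
rewrite [in RHS](gbS p n k) [in RHS](gbS p n k.+1) gbS (IH k) (IH k.+1).
have [le|lt] := leqP k.+1 n.
  have E1 : p ^ k.+2 * (p ^ (n - k.+1) * gbinom p n k.+1)
          = p ^ (n.+1 - k.+1) * (p ^ k.+1 * gbinom p n k.+1).
    by rewrite !mulnA -!expnD; congr (p ^ _ * _); lia.
  rewrite subSS in E1 *; rewrite [in LHS]mulnDr E1 [in RHS]mulnDr.
  by rewrite -!addnA (addnCA (gbinom p n k.+1)).
rewrite (@gbinom0 p n k.+1); last by rewrite ltnS.
rewrite (@gbinom0 p n k.+2); last by rewrite ltnS ltnW.
by rewrite !muln0 !addn0 subSS.
Qed.

Lemma gb_lower p n k : 0 < p -> k <= n -> p ^ (k * (n - k)) <= gbinom p n k.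
Proof.
move=> p0.
elim: n k => [|n IH] k.
  by rewrite leqn0 => /eqP ->; rewrite gbn0 mul0n expn0.
case: k => [|k] H.
  by rewrite gbn0 mul0n expn0.
rewrite gbS.
have [le|lt] := leqP k.+1 n.
  apply: leq_trans (leq_addl _ _).
  apply: leq_trans (leq_mul (leqnn _) (IH _ le)).
  by rewrite -expnD; apply: leq_pexp2l => //; nia.
have e : k = n by lia.
subst k; rewrite subSS subnn muln0 expn0.
apply: leq_trans (leq_addr _ _).
by have := IH n (leqnn n); rewrite subnn muln0 expn0.
Qed.

Lemma gb_upper p n k : 1 < p -> gbinom p n k <= p ^ (k * (n - k) + k).
Proof.
move=> p1.
elim: n k => [|n IH] k.
  by case: k => [|k]; rewrite ?gbn0 //.
case: k => [|k]; first by rewrite gbn0 expn_gt0; lia.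
rewrite pascal2.
have [lt|le] := ltnP k n.
  set T := (k.+1 * (n.+1 - k.+1) + k.+1).
  have h1 : p ^ (n - k) * gbinom p n k <= p ^ T.-1.
    apply: leq_trans (leq_mul (leqnn _) (IH k)) _.
    rewrite -expnD; apply: leq_pexp2l; first lia.
    rewrite /T; nia.
  have h2 : gbinom p n k.+1 <= p ^ T.-1.
    apply: leq_trans (IH k.+1) _; apply: leq_pexp2l; first lia.
    rewrite /T; nia.
  have hT : T = T.-1.+1 by rewrite prednK // /T addnS.
  rewrite hT expnS; apply: leq_trans (leq_add h1 h2) _.
  rewrite addnn -mul2n; exact: leq_mul.
rewrite (@gbinom0 p n k.+1); last by rewrite ltnS.
rewrite addn0.
apply: leq_trans (leq_mul (leqnn _) (IH k)) _.
rewrite -expnD; apply: leq_pexp2l; first lia.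
nia.
Qed.

Lemma tele (nu : nat -> nat) N : noninc nu ->
  \sum_(i < N) (nu i - nu i.+1) = nu 0 - nu N.
Proof.
move=> H; elim: N => [|N IH]; first by rewrite big_ord0 subnn.
rewrite big_ord_recr /= IH.
have := H N.
have : nu N <= nu 0.
  elim: (N) => // m IHm; exact: leq_trans (H m) IHm.
lia.
Qed.

(* Sequences are 0-indexed: lam i stands for lambda_{i+1}.  N bounds the
   (finite) support of lam, so the infinite products are the products over i < N. *)
Theorem proposition6p3 (p : nat) (lam nu : nat -> nat) (N : nat) :
  prime p -> noninc lam -> noninc nu ->
  (forall i, N <= i -> lam i = 0) ->
  (forall i, nu i <= lam i) ->
  \prod_(i < N) p ^ (nu i * (lam i - nu i))
    <= \prod_(i < N) (p ^ (nu i.+1 * (lam i - nu i))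
                       * gbinom p (lam i - nu i.+1) (nu i - nu i.+1))
  /\
  \prod_(i < N) (p ^ (nu i.+1 * (lam i - nu i))
                  * gbinom p (lam i - nu i.+1) (nu i - nu i.+1))
    <= p ^ (nu 0) * \prod_(i < N) p ^ (nu i * (lam i - nu i)).
Proof.
move=> pp hl hn hN hle.
have p1 := prime_gt1 pp.
have p0 : 0 < p by lia.
split.
  apply: leq_prod => i _.
  have h1 := hn i; have h2 := hle i.
  have hk : nu i - nu i.+1 <= lam i - nu i.+1 by lia.
  apply: leq_trans _ (leq_mul (leqnn _) (@gb_lower p _ _ p0 hk)).
  rewrite -expnD; apply: leq_pexp2l; first lia.
  have -> : lam i - nu i.+1 - (nu i - nu i.+1) = lam i - nu i by lia.
  nia.
have hz : nu N = 0 by have := hle N; rewrite hN //; lia.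
have -> : nu 0 = \sum_(i < N) (nu i - nu i.+1) by rewrite (@tele nu N hn) hz subn0.
rewrite expn_sum -big_split /=.
apply: leq_prod => i _.
have h1 := hn i; have h2 := hle i.
apply: leq_trans (leq_mul (leqnn _) (@gb_upper p _ _ p1)) _.
rewrite -!expnD; apply: leq_pexp2l; first lia.
have -> : lam i - nu i.+1 - (nu i - nu i.+1) = lam i - nu i by lia.
nia.
Qed.
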